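(* Let $\Gamma_H$ be the H-junction tree with edges $e_1,\dots,e_5$ of propagation times $t_1,\dots,t_5$, linearly independent over $\mathbb{Q}$, where the two interior vertices are $A$ (incident to $e_1,e_2,e_3$) and $B$ (incident to $e_3,e_4,e_5$). Then for all $T\ge 0$ $$N(\Gamma_H,A,B,T) = \#[2n_1t_1 + 2n_2t_2 + 2n_3t_3 + 2n_4t_4 \le T - t_3] + \#[2n_1t_1 + 2n_2t_2 + 2n_3t_3 + 2n_5t_5 \le T - t_3] + \#[2n_1t_1 + 2n_2t_2 + 2n_4t_4 + 2n_5t_5 \le T - t_3] - \#[2n_1t_1 + 2n_2t_2 \le T - t_3].$$
   Context: $\Gamma_H$ has six vertices: $A$, $B$, and the four distinct valence-one endpoints of $e_1,e_2,e_4,e_5$ other than $A$, $B$; $e_3$ joins $A$ and $B$. Dynamics: each edge $e_i$ is traversed in time $t_i$; at time $0$ the process starts at $A$ (a point departs from $A$ along each incident edge); at a valence-one vertex a point is reflected; if $k$ points arrive simultaneously at an interior vertex of valence $v$, then $v$ points leave it, one along each incident edge, and $v-k$ new points are said to be born there. $N(\Gamma,A,X,T)$ is the total number of new points born at vertex $X$ up to the moment $T$ when the process starts at $A$. $\#[\text{inequality}]$ denotes the number of tuples of nonnegative integers $n_i$ satisfying the inequality (it is $0$ if the right-hand side is negative). *)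

(* Defs.v *)
From HB Require Import structures.
From mathcomp Require Import all_boot all_algebra.
From mathcomp Require Import boolp classical_sets fsbigop reals.
Set Implicit Arguments. Unset Strict Implicit. Unset Printing Implicit Defensive.
Import GRing.Theory Num.Theory.
Local Open Scope ring_scope.
Local Open Scope classical_set_scope.

Inductive vtx := VA | VB | V1 | V2 | V4 | V5.
Inductive edge := E1 | E2 | E3 | E4 | E5.

Definition ends (e : edge) : vtx * vtx :=
  match e with
  | E1 => (VA, V1) | E2 => (VA, V2) | E3 => (VA, VB)
  | E4 => (VB, V4) | E5 => (VB, V5)
  end.

Definition all_edges : seq edge := [:: E1; E2; E3; E4; E5].

Definition joins (e : edge) (u v : vtx) : Prop :=
  ends e = (u, v) \/ ends e = (v, u).

Definition incident (e : edge) (v : vtx) : Prop := exists u, joins e u v.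

Definition valence (v : vtx) : nat :=
  \sum_(e <- all_edges) (asbool (incident e v) : nat).

Definition tH (R : realType) (t1 t2 t3 t4 t5 : R) (e : edge) : R :=
  match e with E1 => t1 | E2 => t2 | E3 => t3 | E4 => t4 | E5 => t5 end.

(* At time 0 points leave the starting vertex src along each
   incident edge; whenever a point arrives at a vertex v (along any edge),
   at that moment points leave v along every incident edge (reflection at a
   valence-one vertex; at an interior vertex v points leave). *)
Inductive departs (R : realType) (t : edge -> R) (src : vtx) : vtx -> R -> Prop :=
| dep_start : departs t src src 0
| dep_step : forall (e : edge) (u v : vtx) (s : R),
    joins e u v -> departs t src u s -> departs t src v (s + t e).

Definition arrives_via (R : realType) (t : edge -> R) (src v : vtx) (e : edge)
    (tau : R) : Prop :=
  exists u s, joins e u v /\ departs t src u s /\ tau = s + t e.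

(* number k of points arriving simultaneously at v at time tau *)
Definition n_arrivals (R : realType) (t : edge -> R) (src v : vtx) (tau : R) : nat :=
  \sum_(e <- all_edges) (asbool (arrives_via t src v e tau) : nat).

Definition arrival_times (R : realType) (t : edge -> R) (src v : vtx) (T : R) : set R :=
  [set tau | tau <= T /\ exists e, arrives_via t src v e tau].

(* N(Gamma, src, X, T): total number of new points born at X up to moment T;
   at each arrival moment tau, valence X - k points are born. *)
Definition N_born (R : realType) (t : edge -> R) (src X : vtx) (T : R) : R :=
  \sum_(tau \in arrival_times t src X T)
     ((valence X - n_arrivals t src X tau)%N%:R : R).

(* #[ 2 n_1 a_1 + ... + 2 n_k a_k <= c ] : number of tuples of nonnegative
   integers (n_1,...,n_k), k = size a, satisfying the inequality. *)
Definition count_sol (R : realType) (a : seq R) (c : R) : R :=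
  \sum_(n \in [set n : seq nat | size n = size a /\
        \sum_(i < size a) 2 * (nth 0%N n i)%:R * nth 0 a i <= c]) (1 : R).

(* Main.v *)
Require Import Defs.
From HB Require Import structures.
From mathcomp Require Import all_boot all_order all_algebra.
From mathcomp Require Import boolp classical_sets fsbigop reals.
From mathcomp Require Import ring lra zify.
From mathcomp Require Import functions cardinality.
Import GRing.Theory Num.Theory.
Import Order.TTheory.
Local Open Scope ring_scope.
Local Open Scope classical_set_scope.
Set Implicit Arguments.

Section S.
Variables (R : realType) (t1 t2 t3 t4 t5 : R).
Let t := tH t1 t2 t3 t4 t5.
Definition W (m1 m2 m3 m4 m5 : nat) : R :=
  m1%:R * t1 + m2%:R * t2 + m3%:R * t3 + m4%:R * t4 + m5%:R * t5.

Definition Inv (v : vtx) (s : R) : Prop :=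
  exists m1 m2 m3 m4 m5 : nat, match v with
  | VA => s = 2 * W m1 m2 m3 m4 m5 /\ (m3 = 0%N -> m4 = 0%N /\ m5 = 0%N)
  | VB => s = 2 * W m1 m2 m3 m4 m5 + t3
  | V1 => s = 2 * W m1 m2 m3 m4 m5 + t1 /\ (m3 = 0%N -> m4 = 0%N /\ m5 = 0%N)
  | V2 => s = 2 * W m1 m2 m3 m4 m5 + t2 /\ (m3 = 0%N -> m4 = 0%N /\ m5 = 0%N)
  | V4 => s = 2 * W m1 m2 m3 m4 m5 + t3 + t4
  | V5 => s = 2 * W m1 m2 m3 m4 m5 + t3 + t5
  end.

Lemma dep_sound v s : departs t VA v s -> Inv v s.
Proof.
elim => [|e u w s' J _ IH].
  by exists 0%N, 0%N, 0%N, 0%N, 0%N; split => //; rewrite /W; ring.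
move: J; rewrite /joins; case: e => /= -[] [? ?]; subst;
  case: IH => m1 [m2 [m3 [m4 [m5 H]]]]; rewrite /t /=.
- case: H => -> H; exists m1, m2, m3, m4, m5; split => //; rewrite /W; ring.
- case: H => -> H; exists m1.+1, m2, m3, m4, m5; split => //; rewrite /W -addn1 natrD; ring.
- case: H => -> H; exists m1, m2, m3, m4, m5; split => //; rewrite /W; ring.
- case: H => -> H; exists m1, m2.+1, m3, m4, m5; split => //; rewrite /W -addn1 natrD; ring.
- case: H => -> H; exists m1, m2, m3, m4, m5; rewrite /W; ring.
- move: H => ->; exists m1, m2, m3.+1, m4, m5; split => //; rewrite /W -addn1 natrD; ring.
- move: H => ->; exists m1, m2, m3, m4, m5; rewrite /W; ring.
- move: H => ->; exists m1, m2, m3, m4.+1, m5; rewrite /W -addn1 natrD; ring.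
- move: H => ->; exists m1, m2, m3, m4, m5; rewrite /W; ring.
- move: H => ->; exists m1, m2, m3, m4, m5.+1; rewrite /W -addn1 natrD; ring.
Qed.


Lemma dep_eq u s s' : departs t VA u s -> s = s' -> departs t VA u s'.
Proof. by move=> H <-. Qed.

Lemma joins_sym e u v : joins e u v -> joins e v u.
Proof. by case=> H; [right|left]. Qed.

Lemma dep_step' e u v s : joins e u v -> departs t VA u s -> departs t VA v (s + t e).
Proof. by move=> J D; apply: dep_step J D. Qed.

Lemma loop e u v s k : joins e u v -> departs t VA u s ->
  departs t VA u (s + 2 * (k%:R * t e)).
Proof.
move=> J D; elim: k => [|k IH].
  by apply: dep_eq D _; rewrite mul0r mulr0 addr0.
have := dep_step' (joins_sym J) (dep_step' J IH).
by move/dep_eq; apply; rewrite -addn1 natrD; ring.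
Qed.

Lemma depB m1 m2 m3 m4 m5 : departs t VA VB (2 * W m1 m2 m3 m4 m5 + t3).
Proof.
have J1 : joins E1 VA V1 by left.
have J2 : joins E2 VA V2 by left.
have J3 : joins E3 VB VA by right.
have J3' : joins E3 VA VB by left.
have J4 : joins E4 VB V4 by left.
have J5 : joins E5 VB V5 by left.
have D0 : departs t VA VA 0 by constructor.
have D1 := loop m1 J1 D0.
have D2 := loop m2 J2 D1.
have D3 := dep_step' J3' D2.
have D4 := loop m3 J3 D3.
have D5 := loop m4 J4 D4.
have D6 := loop m5 J5 D5.
by apply: dep_eq D6 _; rewrite /W /t /=; ring.
Qed.

Lemma depA m1 m2 m3 m4 m5 : (0 < m3)%N \/ (m4 = 0%N /\ m5 = 0%N) ->
  departs t VA VA (2 * W m1 m2 m3 m4 m5).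
Proof.
case.
  case: m3 => // k _.
  have J3 : joins E3 VB VA by right.
  have D := dep_step' J3 (depB m1 m2 k m4 m5).
  by apply: dep_eq D _; rewrite /W /t /= -addn1 natrD; ring.
case=> -> ->.
have J1 : joins E1 VA V1 by left.
have J2 : joins E2 VA V2 by left.
have J3' : joins E3 VA VB by left.
have D0 : departs t VA VA 0 by constructor.
have D1 := loop m1 J1 D0.
have D2 := loop m2 J2 D1.
have D3 := loop m3 J3' D2.
by apply: dep_eq D3 _; rewrite /W /t /=; ring.
Qed.

Definition Lf m1 m2 m3 m4 m5 := t3 + 2 * W m1 m2 m3 m4 m5.

Lemma cE3 m1 m2 m3 m4 m5 : (0 < m3)%N \/ (m4 = 0%N /\ m5 = 0%N) ->
  arrives_via t VA VB E3 (Lf m1 m2 m3 m4 m5).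
Proof.
move=> H; exists VA, (2 * W m1 m2 m3 m4 m5); split; first by left.
split; first exact: depA.
by rewrite /Lf /t /=; ring.
Qed.

Lemma cE4 m1 m2 m3 m4 m5 : (0 < m4)%N ->
  arrives_via t VA VB E4 (Lf m1 m2 m3 m4 m5).
Proof.
case: m4 => // k _.
exists V4, (2 * W m1 m2 m3 k m5 + t3 + t4); split; first by right.
split.
  have J : joins E4 VB V4 by left.
  exact: dep_step' J (depB _ _ _ _ _).
by rewrite /Lf /t /W /= -addn1 natrD; ring.
Qed.

Lemma cE5 m1 m2 m3 m4 m5 : (0 < m5)%N ->
  arrives_via t VA VB E5 (Lf m1 m2 m3 m4 m5).
Proof.
case: m5 => // k _.
exists V5, (2 * W m1 m2 m3 m4 k + t3 + t5); split; first by right.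
split.
  have J : joins E5 VB V5 by left.
  exact: dep_step' J (depB _ _ _ _ _).
by rewrite /Lf /t /W /= -addn1 natrD; ring.
Qed.

Lemma sE3 tau : arrives_via t VA VB E3 tau -> exists m1 m2 m3 m4 m5,
  tau = Lf m1 m2 m3 m4 m5 /\ ((0 < m3)%N \/ (m4 = 0%N /\ m5 = 0%N)).
Proof.
case=> u [s [J [D ->]]].
move: J; rewrite /joins /= => -[] [] // ?; subst.
case: (dep_sound D) => m1 [m2 [m3 [m4 [m5 [-> H]]]]].
exists m1, m2, m3, m4, m5; split; first by rewrite /Lf /t /=; ring.
by case: m3 H => [/(_ erefl)|k _]; [right|left].
Qed.

Lemma sE4 tau : arrives_via t VA VB E4 tau -> exists m1 m2 m3 m4 m5,
  tau = Lf m1 m2 m3 m4 m5 /\ (0 < m4)%N.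
Proof.
case=> u [s [J [D ->]]].
move: J; rewrite /joins /= => -[] [] // ?; subst.
case: (dep_sound D) => m1 [m2 [m3 [m4 [m5 ->]]]].
exists m1, m2, m3, m4.+1, m5; split => //.
by rewrite /Lf /t /W /= -addn1 natrD; ring.
Qed.

Lemma sE5 tau : arrives_via t VA VB E5 tau -> exists m1 m2 m3 m4 m5,
  tau = Lf m1 m2 m3 m4 m5 /\ (0 < m5)%N.
Proof.
case=> u [s [J [D ->]]].
move: J; rewrite /joins /= => -[] [] // ?; subst.
case: (dep_sound D) => m1 [m2 [m3 [m4 [m5 ->]]]].
exists m1, m2, m3, m4, m5.+1; split => //.
by rewrite /Lf /t /W /= -addn1 natrD; ring.
Qed.

Lemma sE1 tau : ~ arrives_via t VA VB E1 tau.
Proof. by case=> u [s [J _]]; case: J => /= -[]. Qed.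

Lemma sE2 tau : ~ arrives_via t VA VB E2 tau.
Proof. by case=> u [s [J _]]; case: J => /= -[]. Qed.

Hypothesis hindep : forall q1 q2 q3 q4 q5 : rat,
     ratr q1 * t1 + ratr q2 * t2 + ratr q3 * t3 + ratr q4 * t4 + ratr q5 * t5 = 0 ->
     q1 = 0 /\ q2 = 0 /\ q3 = 0 /\ q4 = 0 /\ q5 = 0.

Lemma Lf_inj m1 m2 m3 m4 m5 n1 n2 n3 n4 n5 :
  Lf m1 m2 m3 m4 m5 = Lf n1 n2 n3 n4 n5 ->
  [/\ m1 = n1, m2 = n2, m3 = n3, m4 = n4 & m5 = n5].
Proof.
rewrite /Lf /W => E.
have := hindep (m1%:R - n1%:R) (m2%:R - n2%:R) (m3%:R - n3%:R)
  (m4%:R - n4%:R) (m5%:R - n5%:R).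
rewrite !rmorphB !rmorph_nat.
have H : forall a b : nat, (a%:R - b%:R : rat) = 0 -> a = b.
  by move=> a b /eqP; rewrite subr_eq0 eqr_nat => /eqP.
by case; [lra | move=> /H ? [/H ? [/H ? [/H ? /H ?]]]].
Qed.

Hypothesis hpos : 0 < t1 /\ 0 < t2 /\ 0 < t3 /\ 0 < t4 /\ 0 < t5.
Variable T : R.
Hypothesis hT : 0 <= T.

Definition tup := (nat * nat * nat * nat * nat)%type.
Definition Lt (n : tup) : R := let '(a, b, c, d, e) := n in Lf a b c d e.
Definition S : set tup := [set n | Lt n <= T].

Lemma bnd c : 0 < c -> exists M, forall x : nat, x%:R * c <= T -> (x < M)%N.
Proof.
move=> c0; exists (Num.truncn (T / c)).+1 => x H.
rewrite ltnS truncn_ge_nat; last by rewrite divr_ge0 // ltW.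

by rewrite ler_pdivlMr.
Qed.

Lemma S_fin : finite_set S.
Proof.
case: hpos => p1 [p2 [p3 [p4 p5]]].
have [M1 H1] := @bnd _ p1; have [M2 H2] := @bnd _ p2; have [M3 H3] := @bnd _ p3.
have [M4 H4] := @bnd _ p4; have [M5 H5] := @bnd _ p5.
pose M := (M1 + M2 + M3 + M4 + M5)%N.
apply: (@sub_finite_set _ _ (`I_M `*` `I_M `*` `I_M `*` `I_M `*` `I_M)).
  move=> x; case: x => [[[[a b] c] d] e]. rewrite /S /Lt /Lf /W /= => H.
  have q1 : 0 <= a%:R * t1 by apply: mulr_ge0; [apply: ler0n | apply: ltW].
  have q2 : 0 <= b%:R * t2 by apply: mulr_ge0; [apply: ler0n | apply: ltW].
  have q3 : 0 <= c%:R * t3 by apply: mulr_ge0; [apply: ler0n | apply: ltW].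
  have q4 : 0 <= d%:R * t4 by apply: mulr_ge0; [apply: ler0n | apply: ltW].
  have q5 : 0 <= e%:R * t5 by apply: mulr_ge0; [apply: ler0n | apply: ltW].
  have := H1 a; have := H2 b; have := H3 c; have := H4 d; have := H5 e.
  move=> r5 r4 r3 r2 r1.
  have {r1}r1 := r1 ltac:(lra). have {r2}r2 := r2 ltac:(lra).
  have {r3}r3 := r3 ltac:(lra). have {r4}r4 := r4 ltac:(lra).
  have {r5}r5 := r5 ltac:(lra).
  rewrite /M; clear -r1 r2 r3 r4 r5; repeat split; lia.
by do 4 apply: finite_setX => //; apply: finite_II.
Qed.

Lemma arr_eq : arrival_times t VA VB T = Lt @` S.
Proof.
apply/seteqP; split.
  move=> tau [le [[]]].
  - by move/sE1.
  - by move/sE2.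
  - case/sE3=> m1 [m2 [m3 [m4 [m5 [E _]]]]].
    by exists (m1, m2, m3, m4, m5); rewrite /S /= -?E.
  - case/sE4=> m1 [m2 [m3 [m4 [m5 [E _]]]]].
    by exists (m1, m2, m3, m4, m5); rewrite /S /= -?E.
  - case/sE5=> m1 [m2 [m3 [m4 [m5 [E _]]]]].
    by exists (m1, m2, m3, m4, m5); rewrite /S /= -?E.
move=> _ [[[[[a b] c] d] e] Sn <-]; split => //=.
have : ((0 < c)%N \/ (d = 0%N /\ e = 0%N)) \/ (0 < d)%N \/ (0 < e)%N.
  by clear Sn; case: c d e => [|?] [|?] [|?]; auto.
case=> [H|[H|H]].
- by exists E3; apply: cE3.
- by exists E4; apply: cE4.
- by exists E5; apply: cE5.
Qed.

Definition kk (n : tup) : nat := let '(a, b, c, d, e) := n in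
  (((0 < c)%N || ((d == 0%N) && (e == 0%N))) + (0 < d)%N + (0 < e)%N)%N.

Lemma narr n : n_arrivals t VA VB (Lt n) = kk n.
Proof.
case: n => [[[[a b] c] d] e].
rewrite /n_arrivals /all_edges !big_cons big_nil /=.
rewrite (asboolF (@sE1 _)) (asboolF (@sE2 _)).
rewrite (@asbool_equiv_eqP _ _ ((0 < c)%N || ((d == 0%N) && (e == 0%N))) idP); last first.
  split.
    case/sE3 => m1 [m2 [m3 [m4 [m5 [/Lf_inj [? ? ? ? ?] H]]]]]; subst.
    by case: H => [->|[-> ->]] //; rewrite orbT.
  by case/orP => [H|/andP[/eqP -> /eqP ->]]; apply: cE3; auto.
rewrite (@asbool_equiv_eqP _ _ (0 < d)%N idP); last first.
  split; last exact: cE4.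
  by case/sE4 => m1 [m2 [m3 [m4 [m5 [/Lf_inj [? ? ? ? ?] H]]]]]; subst.
rewrite (@asbool_equiv_eqP _ _ (0 < e)%N idP); last first.
  split; last exact: cE5.
  by case/sE5 => m1 [m2 [m3 [m4 [m5 [/Lf_inj [? ? ? ? ?] H]]]]]; subst.
by rewrite !add0n addn0 addnA.
Qed.

Lemma valB : valence VB = 3%N.
Proof.
rewrite /valence /all_edges !big_cons big_nil /=.
rewrite (asboolF (P := incident E1 VB)); last by case=> u [] /= [].
rewrite (asboolF (P := incident E2 VB)); last by case=> u [] /= [].
rewrite (asboolT (P := incident E3 VB)); last by exists VA; left.
rewrite (asboolT (P := incident E4 VB)); last by exists V4; right.
by rewrite (asboolT (P := incident E5 VB)); last by exists V5; right.
Qed.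

Lemma Lt_inj : set_inj S Lt.
Proof.
move=> [[[[a b] c] d] e] [[[[a' b'] c'] d'] e'] _ _ /=.
by case/Lf_inj => -> -> -> -> ->.
Qed.

Lemma cs_widen (p : pred tup) :
  \sum_(n \in S `&` [set n | p n]) (1 : R) = \sum_(n \in S) ((p n)%:R : R).
Proof.
rewrite (eq_fsbigr (fun n => (p n)%:R)); last first.
  by move=> n; rewrite inE => -[_ /= ->].
apply: fsbig_widen => [n [] //|n [Sn] /= H].
by case: (boolP (p n)) H => //= Hp []; split.
Qed.

Definition p5 (n : tup) : bool := let '(a, b, c, d, e) := n in e == 0%N.
Definition p4 (n : tup) : bool := let '(a, b, c, d, e) := n in d == 0%N.
Definition p3 (n : tup) : bool := let '(a, b, c, d, e) := n in c == 0%N.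
Definition p0 (n : tup) : bool := let '(a, b, c, d, e) := n in
  [&& c == 0%N, d == 0%N & e == 0%N].

Lemma cs1 : count_sol [:: t1; t2; t3; t4] (T - t3) =
  \sum_(n \in S `&` [set n | p5 n]) (1 : R).
Proof.
rewrite /count_sol.
apply: (reindex_fsbig (fun n : tup => let '(a, b, c, d, e) := n in [:: a; b; c; d])).
split.
- move=> [[[[a b] c] d] e] [/= Hs /eqP He]; subst e; split => //=.
  rewrite !big_ord_recl big_ord0 /=.
  move: Hs; rewrite /S /Lt /Lf /W /= ?mul0r; lra.
- move=> [[[[a b] c] d] e] [[[[a' b'] c'] d'] e'] Hx Hy.
  rewrite !inE in Hx Hy; case: Hx => _ /= /eqP ->; case: Hy => _ /= /eqP ->.
  by case=> -> -> -> ->.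
- move=> x [].
  case: x => [|a [|b [|c [|d [|? ?]]]]] //= _.
  rewrite !big_ord_recl big_ord0 /= => H.
  exists (a, b, c, d, 0%N) => //; split => //=.
  rewrite /S /Lt /Lf /W /= ?mul0r; lra.
Qed.

Lemma cs2 : count_sol [:: t1; t2; t3; t5] (T - t3) =
  \sum_(n \in S `&` [set n | p4 n]) (1 : R).
Proof.
rewrite /count_sol.
apply: (reindex_fsbig (fun n : tup => let '(a, b, c, d, e) := n in [:: a; b; c; e])).
split.
- move=> [[[[a b] c] d] e] [/= Hs /eqP He]; subst d; split => //=.
  rewrite !big_ord_recl big_ord0 /=.
  move: Hs; rewrite /S /Lt /Lf /W /= ?mul0r; lra.
- move=> [[[[a b] c] d] e] [[[[a' b'] c'] d'] e'] Hx Hy.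
  rewrite !inE in Hx Hy; case: Hx => _ /= /eqP ->; case: Hy => _ /= /eqP ->.
  by case=> -> -> -> ->.
- move=> x [].
  case: x => [|a [|b [|c [|e [|? ?]]]]] //= _.
  rewrite !big_ord_recl big_ord0 /= => H.
  exists (a, b, c, 0%N, e) => //; split => //=.
  rewrite /S /Lt /Lf /W /= ?mul0r; lra.
Qed.

Lemma cs3 : count_sol [:: t1; t2; t4; t5] (T - t3) =
  \sum_(n \in S `&` [set n | p3 n]) (1 : R).
Proof.
rewrite /count_sol.
apply: (reindex_fsbig (fun n : tup => let '(a, b, c, d, e) := n in [:: a; b; d; e])).
split.
- move=> [[[[a b] c] d] e] [/= Hs /eqP He]; subst c; split => //=.
  rewrite !big_ord_recl big_ord0 /=.
  move: Hs; rewrite /S /Lt /Lf /W /= ?mul0r; lra.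
- move=> [[[[a b] c] d] e] [[[[a' b'] c'] d'] e'] Hx Hy.
  rewrite !inE in Hx Hy; case: Hx => _ /= /eqP ->; case: Hy => _ /= /eqP ->.
  by case=> -> -> -> ->.
- move=> x [].
  case: x => [|a [|b [|d [|e [|? ?]]]]] //= _.
  rewrite !big_ord_recl big_ord0 /= => H.
  exists (a, b, 0%N, d, e) => //; split => //=.
  rewrite /S /Lt /Lf /W /= ?mul0r; lra.
Qed.

Lemma cs0 : count_sol [:: t1; t2] (T - t3) =
  \sum_(n \in S `&` [set n | p0 n]) (1 : R).
Proof.
rewrite /count_sol.
apply: (reindex_fsbig (fun n : tup => let '(a, b, c, d, e) := n in [:: a; b])).
split.
- move=> [[[[a b] c] d] e] [/= Hs /and3P [/eqP ? /eqP ? /eqP ?]]; subst; split => //=.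
  rewrite !big_ord_recl big_ord0 /=.
  move: Hs; rewrite /S /Lt /Lf /W /= ?mul0r; lra.
- move=> [[[[a b] c] d] e] [[[[a' b'] c'] d'] e'] Hx Hy.
  rewrite !inE in Hx Hy; case: Hx => _ /= /and3P [/eqP -> /eqP -> /eqP ->].
  case: Hy => _ /= /and3P [/eqP -> /eqP -> /eqP ->].
  by case=> -> ->.
- move=> x [].
  case: x => [|a [|b [|? ?]]] //= _.
  rewrite !big_ord_recl big_ord0 /= => H.
  exists (a, b, 0%N, 0%N, 0%N) => //; split => //=.
  rewrite /S /Lt /Lf /W /= ?mul0r; lra.
Qed.

Lemma pointwise (n : tup) :
  ((3 - kk n)%N%:R : R) = (p5 n)%:R + (p4 n)%:R + (p3 n)%:R - (p0 n)%:R.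
Proof.
have H : (3 - kk n + p0 n = p5 n + p4 n + p3 n)%N.
  by case: n => [[[[a b] c] d] e]; case: c d e => [|c] [|d] [|e].
by rewrite -!natrD -H natrD addrK.
Qed.

Lemma main_sec : N_born t VA VB T =
    count_sol [:: t1; t2; t3; t4] (T - t3)
  + count_sol [:: t1; t2; t3; t5] (T - t3)
  + count_sol [:: t1; t2; t4; t5] (T - t3)
  - count_sol [:: t1; t2] (T - t3).
Proof.
rewrite /N_born arr_eq fsbig_image; last exact: Lt_inj.
rewrite cs1 cs2 cs3 cs0 !cs_widen.
rewrite (eq_fsbigr (fun n => (p5 n)%:R + (p4 n)%:R + (p3 n)%:R - (p0 n)%:R)); last first.
  by move=> n _; rewrite narr valB pointwise.
rewrite !fsbig_finite; try exact: S_fin.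
by rewrite sumrB !big_split.
Qed.

End S.

Theorem mainTheorem4 (R : realType) (t1 t2 t3 t4 t5 : R)
  (hpos : 0 < t1 /\ 0 < t2 /\ 0 < t3 /\ 0 < t4 /\ 0 < t5)
  (hindep : forall q1 q2 q3 q4 q5 : rat,
     ratr q1 * t1 + ratr q2 * t2 + ratr q3 * t3 + ratr q4 * t4 + ratr q5 * t5 = 0 ->
     q1 = 0 /\ q2 = 0 /\ q3 = 0 /\ q4 = 0 /\ q5 = 0)
  (T : R) (hT : 0 <= T) :
  N_born (tH t1 t2 t3 t4 t5) VA VB T =
    count_sol [:: t1; t2; t3; t4] (T - t3)
  + count_sol [:: t1; t2; t3; t5] (T - t3)
  + count_sol [:: t1; t2; t4; t5] (T - t3)
  - count_sol [:: t1; t2] (T - t3).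
Proof. by apply: main_sec. Qed.
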